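(* For an object $M$ of an abelian category, the following four conditions are equivalent: (P1 left) for every $m\ge0$ and every subobject $N'\subseteq M^m$ there are $k,l\ge0$ and morphisms $\alpha:M^k\to M^m$, $\beta:M^k\to M^l$ with $N'=\alpha(\ker\beta)$; (P2 left) every subobject $N'\subseteq M^n$ (any $n$) lies in the smallest class $\mathcal{C}$ of subobjects of the powers $M^m$ ($m$ varying) such that (a) $0\subseteq M^m$ and $M^m\subseteq M^m$ lie in $\mathcal{C}$ for all $m$; (b) if $N'\subseteq M^m$ lies in $\mathcal{C}$ and $\varphi:M^m\to M^k$ then $\varphi(N')\subseteq M^k$ lies in $\mathcal{C}$; (c) if $N'\subseteq M^k$ lies in $\mathcal{C}$ and $\varphi:M^m\to M^k$ then $\varphi^{-1}(N')\subseteq M^m$ lies in $\mathcal{C}$; (P1 right) for every $m\ge0$ and every quotient $q:M^m\twoheadrightarrow N$ there are $k,l\ge0$ and morphisms $\alpha:M^m\to M^k$, $\beta:M^l\to M^k$ such that $\ker q=\ker(\pi_\beta\circ\alpha)$, where $\pi_\beta:M^k\to\operatorname{coker}\beta$ is the projection; (P2 right) every quotient of a power $M^n$ lies in the smallest class $\mathcal{C}'$ of quotients of powers $M^m$ such that (a) $M^m\twoheadrightarrow0$ and $\mathrm{id}:M^m\to M^m$ lie in $\mathcal{C}'$; (b) if $M^k\twoheadrightarrow N$ lies in $\mathcal{C}'$ and $\varphi:M^m\to M^k$, then the quotient of $M^m$ given by the image of the composite $M^m\to M^k\to N$ lies in $\mathcal{C}'$; (c) if $M^m\twoheadrightarrow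 N$ lies in $\mathcal{C}'$ and $\varphi:M^m\to M^k$, then $M^k\twoheadrightarrow M^k\sqcup_{M^m}N$ (pushout) lies in $\mathcal{C}'$.
   Context: An object satisfying these equivalent conditions is called principal. Quotients are considered up to isomorphism under the source, i.e. determined by their kernels. *)

(* Defs.v *)
From HB Require Import structures.
From mathcomp Require Import all_boot all_algebra.
Set Implicit Arguments. Unset Strict Implicit. Unset Printing Implicit Defensive.
Import GRing.Theory.
Local Open Scope ring_scope.

Record AbCat := {
  Ob : Type;
  Hom : Ob -> Ob -> zmodType;
  comp : forall A B C : Ob, Hom B C -> Hom A B -> Hom A C;
  idm : forall A : Ob, Hom A A;
  compA : forall A B C D (h : Hom C D) (g : Hom B C) (f : Hom A B),
      comp h (comp g f) = comp (comp h g) f;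
  comp1m : forall A B (f : Hom A B), comp (idm B) f = f;
  compm1 : forall A B (f : Hom A B), comp f (idm A) = f;
  compDl : forall A B C (g1 g2 : Hom B C) (f : Hom A B),
      comp (g1 + g2) f = comp g1 f + comp g2 f;
  compDr : forall A B C (g : Hom B C) (f1 f2 : Hom A B),
      comp g (f1 + f2) = comp g f1 + comp g f2;
  zob : Ob;
  zob_init : forall A (f g : Hom zob A), f = g;
  zob_term : forall A (f g : Hom A zob), f = g;
  bip : Ob -> Ob -> Ob;
  bin1 : forall A B, Hom A (bip A B);
  bin2 : forall A B, Hom B (bip A B);
  bpr1 : forall A B, Hom (bip A B) A;
  bpr2 : forall A B, Hom (bip A B) B;
  bip11 : forall A B, comp (bpr1 A B) (bin1 A B) = idm A;
  bip22 : forall A B, comp (bpr2 A B) (bin2 A B) = idm B;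
  bip12 : forall A B, comp (bpr1 A B) (bin2 A B) = 0;
  bip21 : forall A B, comp (bpr2 A B) (bin1 A B) = 0;
  bipid : forall A B, comp (bin1 A B) (bpr1 A B) + comp (bin2 A B) (bpr2 A B)
                      = idm (bip A B);
  kerob : forall A B, Hom A B -> Ob;
  kmap : forall A B (f : Hom A B), Hom (kerob f) A;
  kmap0 : forall A B (f : Hom A B), comp f (kmap f) = 0;
  kmapU : forall A B (f : Hom A B) X (g : Hom X A), comp f g = 0 ->
      exists! h : Hom X (kerob f), comp (kmap f) h = g;
  cokob : forall A B, Hom A B -> Ob;
  ckmap : forall A B (f : Hom A B), Hom B (cokob f);
  ckmap0 : forall A B (f : Hom A B), comp (ckmap f) f = 0;
  ckmapU : forall A B (f : Hom A B) X (g : Hom B X), comp g f = 0 ->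
      exists! h : Hom (cokob f) X, comp h (ckmap f) = g;
  (* every mono is a kernel of its cokernel *)
  mono_normal : forall A B (f : Hom A B),
      (forall X (g h : Hom X A), comp f g = comp f h -> g = h) ->
      forall X (g : Hom X B), comp (ckmap f) g = 0 ->
      exists h : Hom X A, comp f h = g;
  (* every epi is a cokernel of its kernel *)
  epi_normal : forall A B (f : Hom A B),
      (forall X (g h : Hom B X), comp g f = comp h f -> g = h) ->
      forall X (g : Hom A X), comp g (kmap f) = 0 ->
      exists h : Hom B X, comp h f = g
}.

Arguments Hom : clear implicits.
Arguments comp {a A B C}.
Arguments idm {a}.
Arguments zob {a}.
Arguments bip {a}.
Arguments bin1 {a A B}.
Arguments bin2 {a A B}.
Arguments bpr1 {a A B}.
Arguments bpr2 {a A B}.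
Arguments kerob {a A B}.
Arguments kmap {a A B}.
Arguments cokob {a A B}.
Arguments ckmap {a A B}.

Section Derived.
Variable C : AbCat.
Local Notation Ob := (Ob C).
Local Notation Hom := (Hom C).

Definition mono A B (f : Hom A B) :=
  forall X (g h : Hom X A), comp f g = comp f h -> g = h.
Definition epi A B (f : Hom A B) :=
  forall X (g h : Hom B X), comp g f = comp h f -> g = h.

Fixpoint pow (M : Ob) (n : nat) : Ob :=
  match n with 0%N => zob | n'.+1 => bip M (pow M n') end.

Definition suble X S T (i : Hom S X) (j : Hom T X) :=
  exists f : Hom S T, comp j f = i.
Definition subeq X S T (i : Hom S X) (j : Hom T X) :=
  suble i j /\ suble j i.

Definition imob X Y (g : Hom Y X) := kerob (ckmap g).
Definition immap X Y (g : Hom Y X) : Hom (imob g) X := kmap (ckmap g).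

Definition dimob X Y S (phi : Hom X Y) (i : Hom S X) := imob (comp phi i).
Definition dimmap X Y S (phi : Hom X Y) (i : Hom S X) := immap (comp phi i).

(* inverse image phi^-1(N') of the subobject i : S >-> Y under phi : X -> Y:
   the kernel of X -> Y -> coker i  (i is a kernel of its cokernel). *)
Definition invob X Y S (phi : Hom X Y) (i : Hom S Y) := kerob (comp (ckmap i) phi).
Definition invmap X Y S (phi : Hom X Y) (i : Hom S Y) := kmap (comp (ckmap i) phi).

Definition quoteq X N N' (q : Hom X N) (q' : Hom X N') := subeq (kmap q) (kmap q').

(* the quotient of X given by (the image of) g : X -> Y: the coimage
   X ->> coker (ker g), which has the same kernel as X ->> im g *)
Definition coimob X Y (g : Hom X Y) := cokob (kmap g).
Definition coimmap X Y (g : Hom X Y) : Hom X (coimob g) := ckmap (kmap g).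

(* pushout of q : X ->> N along phi : X -> Y, constructed as the cokernel of
   <phi, -q> : X -> Y (+) N; the map Y -> Y \sqcup_X N. *)
Definition poob X Y N (phi : Hom X Y) (q : Hom X N) :=
  cokob (comp bin1 phi - comp bin2 q : Hom X (bip Y N)).
Definition pomap X Y N (phi : Hom X Y) (q : Hom X N) : Hom Y (poob phi q) :=
  comp (ckmap (comp bin1 phi - comp bin2 q : Hom X (bip Y N))) bin1.

Variable M : Ob.

Definition P1_left :=
  forall (m : nat) (S : Ob) (i : Hom S (pow M m)), mono i ->
  exists (k l : nat) (alpha : Hom (pow M k) (pow M m)) (beta : Hom (pow M k) (pow M l)),
    subeq i (dimmap alpha (kmap beta)).

Inductive classC : forall (m : nat) (S : Ob), Hom S (pow M m) -> Prop :=
  | classC_zero m : classC (0 : Hom zob (pow M m))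
  | classC_top m : classC (idm (pow M m))
  | classC_img m k S (i : Hom S (pow M m)) (phi : Hom (pow M m) (pow M k)) :
      classC i -> classC (dimmap phi i)
  | classC_inv m k S (i : Hom S (pow M k)) (phi : Hom (pow M m) (pow M k)) :
      classC i -> classC (invmap phi i).

Definition P2_left :=
  forall (n : nat) (S : Ob) (i : Hom S (pow M n)), mono i ->
  exists (S' : Ob) (i' : Hom S' (pow M n)), classC i' /\ subeq i i'.

Definition P1_right :=
  forall (m : nat) (N : Ob) (q : Hom (pow M m) N), epi q ->
  exists (k l : nat) (alpha : Hom (pow M m) (pow M k)) (beta : Hom (pow M l) (pow M k)),
    subeq (kmap q) (kmap (comp (ckmap beta) alpha)).

Inductive classC' : forall (m : nat) (N : Ob), Hom (pow M m) N -> Prop :=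
  | classC'_zero m : classC' (0 : Hom (pow M m) zob)
  | classC'_id m : classC' (idm (pow M m))
  | classC'_comp m k N (q : Hom (pow M k) N) (phi : Hom (pow M m) (pow M k)) :
      classC' q -> classC' (coimmap (comp q phi))
  | classC'_po m k N (q : Hom (pow M m) N) (phi : Hom (pow M m) (pow M k)) :
      classC' q -> classC' (pomap phi q).

Definition P2_right :=
  forall (n : nat) (N : Ob) (q : Hom (pow M n) N), epi q ->
  exists (N' : Ob) (q' : Hom (pow M n) N'), classC' q' /\ quoteq q q'.

End Derived.

(* Main.v *)
From HB Require Import structures.
From mathcomp Require Import all_boot all_algebra.
Require Import Defs.
Set Implicit Arguments. Unset Strict Implicit. Unset Printing Implicit Defensive.
Import GRing.Theory.
Local Open Scope ring_scope.

Section Basics.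
Variable C : AbCat.
Local Notation Ob := (Ob C).
Local Notation Hom := (Hom C).

Lemma cA A B D E (h : Hom D E) (g : Hom B D) (f : Hom A B) :
  comp h (comp g f) = comp (comp h g) f.
Proof. exact: compA. Qed.
Lemma c1m A B (f : Hom A B) : comp (idm B) f = f. Proof. exact: comp1m. Qed.
Lemma cm1 A B (f : Hom A B) : comp f (idm A) = f. Proof. exact: compm1. Qed.
Lemma cDl A B D (g1 g2 : Hom B D) (f : Hom A B) :
  comp (g1 + g2) f = comp g1 f + comp g2 f. Proof. exact: compDl. Qed.
Lemma cDr A B D (g : Hom B D) (f1 f2 : Hom A B) :
  comp g (f1 + f2) = comp g f1 + comp g f2. Proof. exact: compDr. Qed.
Lemma c0r A B D (g : Hom B D) : comp g (0 : Hom A B) = 0.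
Proof. by apply: (addrI (comp g 0)); rewrite addr0 -cDr addr0. Qed.
Lemma c0l A B D (f : Hom A B) : comp (0 : Hom B D) f = 0.
Proof. by apply: (addrI (comp 0 f)); rewrite addr0 -cDl addr0. Qed.
Lemma cNr A B D (g : Hom B D) (f : Hom A B) : comp g (- f) = - comp g f.
Proof. by apply: (addrI (comp g f)); rewrite -cDr !subrr c0r. Qed.
Lemma cNl A B D (g : Hom B D) (f : Hom A B) : comp (- g) f = - comp g f.
Proof. by apply: (addrI (comp g f)); rewrite -cDl !subrr c0l. Qed.
Lemma cBr A B D (g : Hom B D) (f1 f2 : Hom A B) :
  comp g (f1 - f2) = comp g f1 - comp g f2. Proof. by rewrite cDr cNr. Qed.
Lemma cBl A B D (g1 g2 : Hom B D) (f : Hom A B) :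
  comp (g1 - g2) f = comp g1 f - comp g2 f. Proof. by rewrite cDl cNl. Qed.

Lemma to_zob A (f : Hom A zob) : f = 0. Proof. exact: zob_term. Qed.
Lemma from_zob A (f : Hom zob A) : f = 0. Proof. exact: zob_init. Qed.

Lemma b11 A B : comp (@bpr1 C A B) bin1 = idm A. Proof. exact: bip11. Qed.
Lemma b22 A B : comp (@bpr2 C A B) bin2 = idm B. Proof. exact: bip22. Qed.
Lemma b12 A B : comp (@bpr1 C A B) bin2 = 0. Proof. exact: bip12. Qed.
Lemma b21 A B : comp (@bpr2 C A B) bin1 = 0. Proof. exact: bip21. Qed.
Lemma b11' A B X (h : Hom A X) : comp (comp h (@bpr1 C A B)) bin1 = h.
Proof. by rewrite -cA b11 cm1. Qed.
Lemma b22' A B X (h : Hom B X) : comp (comp h (@bpr2 C A B)) bin2 = h.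
Proof. by rewrite -cA b22 cm1. Qed.
Lemma b12' A B X (h : Hom A X) : comp (comp h (@bpr1 C A B)) bin2 = 0.
Proof. by rewrite -cA b12 c0r. Qed.
Lemma b21' A B X (h : Hom B X) : comp (comp h (@bpr2 C A B)) bin1 = 0.
Proof. by rewrite -cA b21 c0r. Qed.
Lemma bid A B : comp (@bin1 C A B) bpr1 + comp bin2 bpr2 = idm (bip A B).
Proof. exact: bipid. Qed.

Lemma k0 A B (f : Hom A B) : comp f (kmap f) = 0. Proof. exact: kmap0. Qed.
Lemma ck0 A B (f : Hom A B) : comp (ckmap f) f = 0. Proof. exact: ckmap0. Qed.

Lemma kfact A B (f : Hom A B) X (g : Hom X A) : comp f g = 0 ->
  exists h : Hom X (kerob f), comp (kmap f) h = g.
Proof. by case/(kmapU) => h [H _]; exists h. Qed.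
Lemma ckfact A B (f : Hom A B) X (g : Hom B X) : comp g f = 0 ->
  exists h : Hom (cokob f) X, comp h (ckmap f) = g.
Proof. by case/(ckmapU) => h [H _]; exists h. Qed.

Lemma mono_sub A B (f : Hom A B) : mono f <->
  (forall X (g : Hom X A), comp f g = 0 -> g = 0).
Proof.
split=> H X g.
  by move=> e; apply: H; rewrite e c0r.
by move=> h e; apply/eqP; rewrite -subr_eq0; apply/eqP/H; rewrite cBr e subrr.
Qed.
Lemma epi_sub A B (f : Hom A B) : epi f <->
  (forall X (g : Hom B X), comp g f = 0 -> g = 0).
Proof.
split=> H X g.
  by move=> e; apply: H; rewrite e c0l.
by move=> h e; apply/eqP; rewrite -subr_eq0; apply/eqP/H; rewrite cBl e subrr.
Qed.

Lemma kmap_mono A B (f : Hom A B) : mono (kmap f).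
Proof.
move=> X g h e.
have H : comp f (comp (kmap f) g) = 0 by rewrite cA k0 c0l.
case: (kmapU H) => u [_ U].
by rewrite -(U g erefl) (U h (esym e)).
Qed.
Lemma ckmap_epi A B (f : Hom A B) : epi (ckmap f).
Proof.
move=> X g h e.
have H : comp (comp g (ckmap f)) f = 0 by rewrite -cA ck0 c0r.
case: (ckmapU H) => u [_ U].
by rewrite -(U g erefl) (U h (esym e)).
Qed.

Lemma mono_norm A B (f : Hom A B) X (g : Hom X B) : mono f ->
  comp (ckmap f) g = 0 -> exists h : Hom X A, comp f h = g.
Proof. move=> m; exact: mono_normal. Qed.
Lemma epi_norm A B (f : Hom A B) X (g : Hom A X) : epi f ->
  comp g (kmap f) = 0 -> exists h : Hom B X, comp h f = g.
Proof. move=> m; exact: epi_normal. Qed.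

Lemma mono_comp A B D (g : Hom B D) (f : Hom A B) : mono g -> mono f -> mono (comp g f).
Proof. move=> mg mf X u v; rewrite -!cA => /mg; exact: mf. Qed.
Lemma epi_comp A B D (g : Hom B D) (f : Hom A B) : epi g -> epi f -> epi (comp g f).
Proof. move=> mg mf X u v; rewrite !cA => /mf; exact: mg. Qed.

Lemma suble_refl X S (i : Hom S X) : suble i i.
Proof. by exists (idm S); rewrite cm1. Qed.
Lemma suble_trans X S T U (i : Hom S X) (j : Hom T X) (k : Hom U X) :
  suble i j -> suble j k -> suble i k.
Proof. by case=> f <- [g <-]; exists (comp g f); rewrite cA. Qed.
Lemma subeq_refl X S (i : Hom S X) : subeq i i.
Proof. by split; apply: suble_refl. Qed.
Lemma subeq_sym X S T (i : Hom S X) (j : Hom T X) : subeq i j -> subeq j i.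
Proof. by case. Qed.
Lemma subeq_trans X S T U (i : Hom S X) (j : Hom T X) (k : Hom U X) :
  subeq i j -> subeq j k -> subeq i k.
Proof. by case=> a b [c d]; split; apply: suble_trans; eauto. Qed.
Lemma suble_comp X Y S T (phi : Hom X Y) (i : Hom S X) (j : Hom T X) :
  suble i j -> suble (comp phi i) (comp phi j).
Proof. by case=> f <-; exists f; rewrite cA. Qed.
Lemma subeq_comp X Y S T (phi : Hom X Y) (i : Hom S X) (j : Hom T X) :
  subeq i j -> subeq (comp phi i) (comp phi j).
Proof. by case=> a b; split; apply: suble_comp. Qed.
Lemma suble_compr X S U (i : Hom S X) (f : Hom U S) : suble (comp i f) i.
Proof. by exists f. Qed.

Lemma suble_ker A B (f : Hom A B) X (g : Hom X A) : comp f g = 0 -> suble g (kmap f).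
Proof. by case/kfact=> h e; exists h. Qed.
Lemma suble_ker0 A B (f : Hom A B) X (g : Hom X A) : suble g (kmap f) -> comp f g = 0.
Proof. by case=> h <-; rewrite cA k0 c0l. Qed.


Ltac csimp := repeat progress (rewrite ?cDl ?cDr ?cNl ?cNr ?c0l ?c0r ?cA ?b11' ?b22' ?b12' ?b21'
  ?b11 ?b22 ?b12 ?b21 ?c1m ?cm1 ?c0l ?c0r ?addr0 ?add0r ?subr0 ?sub0r ?oppr0 ?opprK).

Lemma imfact X Y (g : Hom Y X) :
  exists e : Hom Y (imob g), comp (immap g) e = g /\ epi e.
Proof.
case: (kfact (ck0 g)) => e He; exists e; split=> //.
apply/epi_sub => Z a ae.
case: (kfact ae) => e' He'.
have mm : mono (comp (immap g) (kmap a)) by apply: mono_comp; apply: kmap_mono.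
have g' : comp (comp (immap g) (kmap a)) e' = g by rewrite -cA He' He.
have : comp (ckmap (comp (immap g) (kmap a))) g = 0 by rewrite -[X in comp _ X = _]g' cA ck0 c0l.
case/ckfact => h Hh.
have : comp (ckmap (comp (immap g) (kmap a))) (immap g) = 0.
  by rewrite -Hh -cA /immap k0 c0r.
case/(mono_norm mm) => f Hf.
have kf : comp (kmap a) f = idm _.
  apply: (kmap_mono (f:=ckmap g)); rewrite cm1 cA; exact: Hf.
by rewrite -[a]cm1 -kf cA k0 c0l.
Qed.

Lemma immap_mono X Y (g : Hom Y X) : mono (immap g).
Proof. exact: kmap_mono. Qed.

Lemma sub_im X Y (g : Hom Y X) : suble g (immap g).
Proof. by case: (imfact g) => e [He _]; exists e. Qed.

Lemma im_least X Y T (g : Hom Y X) (j : Hom T X) : mono j -> suble g j ->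
  suble (immap g) j.
Proof.
move=> mj [f Hf].
have : comp (ckmap j) g = 0 by rewrite -Hf cA ck0 c0l.
case/ckfact => h Hh.
have : comp (ckmap j) (immap g) = 0 by rewrite -Hh -cA /immap k0 c0r.
by case/(mono_norm mj) => u Hu; exists u.
Qed.

Lemma im_mon X Y Y' (g : Hom Y X) (h : Hom Y' X) : suble g h ->
  suble (immap g) (immap h).
Proof.
move=> gh; apply: im_least; first exact: immap_mono.
apply: suble_trans gh (sub_im h).
Qed.
Lemma im_subeq X Y Y' (g : Hom Y X) (h : Hom Y' X) : subeq g h ->
  subeq (immap g) (immap h).
Proof. by case=> a b; split; apply: im_mon. Qed.
Lemma mono_im X S (i : Hom S X) : mono i -> subeq i (immap i).
Proof. by move=> m; split; [apply: sub_im | apply: im_least; last apply: suble_refl]. Qed.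
Lemma mono_im' X S Y (i : Hom S X) (g : Hom Y X) : mono i -> subeq i g ->
  subeq i (immap g).
Proof. by move=> m e; apply: subeq_trans (mono_im m) (im_subeq e). Qed.

Lemma epi_im X Y Z W (n : Hom Y X) (q : Hom Z Y) (h : Hom W X) : epi q ->
  suble (comp n q) h -> suble n (immap h).
Proof.
move=> eq [f Hf]; case: (imfact h) => e [He _].
have : comp (ckmap (immap h)) n = 0.
  have E : comp n q = comp (immap h) (comp e f) by rewrite cA He Hf.
  apply: ((epi_sub q).1 eq); by rewrite -cA E cA ck0 c0l.
by case/(mono_norm (immap_mono (g:=h))) => u Hu; exists u.
Qed.

Lemma pb_epi A B Z (e : Hom A B) (w : Hom Z B) : epi e ->
  exists W (p : Hom W Z) (t : Hom W A), epi p /\ comp e t = comp w p.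
Proof.
move=> ee.
pose d : Hom (bip Z A) B := comp w bpr1 - comp e bpr2.
have db2 : comp d bin2 = - e by rewrite /d; csimp.
have de : epi d.
  apply/epi_sub => X b bd.
  have : comp b e = 0 by apply/eqP; rewrite -oppr_eq0 -cNr -db2 cA bd c0l.
  by move/((epi_sub _).1 ee).
exists (kerob d), (comp bpr1 (kmap d)), (comp bpr2 (kmap d)); split.
  apply/epi_sub => X a ak.
  have : comp (comp a bpr1) (kmap d) = 0 by rewrite -cA.
  case/(epi_norm de) => h Hh.
  have : comp h e = 0.
    apply/eqP; rewrite -oppr_eq0 -cNr -db2 cA Hh; csimp; done.
  move/((epi_sub _).1 ee) => h0.
  by rewrite -[a]cm1 -(b11 Z A) cA -Hh h0 !c0l.
have := k0 d; rewrite /d cBl => /eqP; rewrite subr_eq0 => /eqP.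
by rewrite -!cA.
Qed.

Lemma kmap_eq A B (f f' : Hom A B) : f = f' -> subeq (kmap f) (kmap f').
Proof. by move->; exact: subeq_refl. Qed.

Lemma ker_compl A B D (u : Hom B D) (f : Hom A B) : suble (kmap f) (kmap (comp u f)).
Proof. by apply: suble_ker; rewrite -cA k0 c0r. Qed.
Lemma ker_mono A B D (u : Hom B D) (f : Hom A B) : mono u ->
  subeq (kmap (comp u f)) (kmap f).
Proof.
move=> mu; split; last exact: ker_compl.
apply: suble_ker; apply: ((mono_sub u).1 mu); by rewrite cA k0.
Qed.

Lemma inv_le X Y S T (phi : Hom X Y) (i : Hom S Y) (i' : Hom T Y) :
  suble i i' -> suble (invmap phi i) (invmap phi i').
Proof.
case=> a Ha.
have : comp (ckmap i') i = 0 by rewrite -Ha cA ck0 c0l.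
case/ckfact => h Hh.
rewrite /invmap; apply: suble_ker.
have E : comp (ckmap i') phi = comp h (comp (ckmap i) phi) by rewrite cA Hh.
by rewrite E -cA k0 c0r.
Qed.
Lemma inv_subeq X Y S T (phi : Hom X Y) (i : Hom S Y) (i' : Hom T Y) :
  subeq i i' -> subeq (invmap phi i) (invmap phi i').
Proof. by case=> a b; split; apply: inv_le. Qed.

Lemma cofact X N (q : Hom X N) :
  exists h : Hom (coimob q) N, comp h (coimmap q) = q /\ mono h.
Proof.
case: (ckfact (k0 q)) => h Hh; exists h; split=> //.
apply/mono_sub => Z a ha.
case: (ckfact ha) => h' Hh'.
have ee : epi (comp (ckmap a) (coimmap q)) by apply: epi_comp; apply: ckmap_epi.
have q' : comp h' (comp (ckmap a) (coimmap q)) = q by rewrite cA Hh' Hh.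
have : comp q (kmap (comp (ckmap a) (coimmap q))) = 0.
  by rewrite -[X in comp X _ = _]q' -cA k0 c0r.
case/kfact => t Ht.
have : comp (coimmap q) (kmap (comp (ckmap a) (coimmap q))) = 0.
  by rewrite -Ht cA /coimmap ck0 c0l.
case/(epi_norm ee) => f Hf.
have fc : comp f (ckmap a) = idm _.
  apply: (ckmap_epi (f:=kmap q)); rewrite c1m -cA; exact: Hf.
by rewrite -[a]c1m -fc -cA ck0 c0r.
Qed.

Lemma ker_coim X Y (g : Hom X Y) : subeq (kmap (coimmap g)) (kmap g).
Proof. apply: subeq_sym; exact: (mono_im (kmap_mono (f:=g))). Qed.

Lemma ker_compq X Y N (q : Hom Y N) (phi : Hom X Y) :
  subeq (kmap (comp q phi)) (invmap phi (kmap q)).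
Proof.
case: (cofact q) => h [Hh mh].
have E : comp q phi = comp h (comp (coimmap q) phi) by rewrite cA Hh.
exact: subeq_trans (kmap_eq E) (ker_mono _ mh).
Qed.

Lemma ker_po X Y N (phi : Hom X Y) (q : Hom X N) :
  subeq (kmap (pomap phi q)) (immap (comp phi (kmap q))).
Proof.
pose d : Hom X (bip Y N) := comp bin1 phi - comp bin2 q.
have Hd : comp (ckmap d) (comp bin1 phi) = comp (ckmap d) (comp bin2 q).
  by apply/eqP; rewrite -subr_eq0 -cBr ck0.
rewrite /pomap -/d; split.
  have : comp (comp (ckmap d) bin1) (kmap (comp (ckmap d) bin1)) = 0 by exact: k0.
  move: (kmap _) => z Hz.
  have : comp (ckmap d) (comp bin1 z) = 0 by rewrite cA.
  case/kfact => w Hw.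
  case: (imfact d) => e [He ee].
  case: (pb_epi w ee) => W [p [t [ep Ht]]].
  have H : comp bin1 (comp z p) = comp d t.
    by rewrite cA -Hw -cA -Ht cA; congr (comp _ t); exact: He.
  have H1 := congr1 (comp bpr1) H; have H2 := congr1 (comp bpr2) H.
  move: H1 H2; rewrite /d; csimp => H1 /eqP; rewrite eq_sym oppr_eq0 => /eqP H2.
  case: (kfact H2) => t' Ht'.
  apply: (epi_im ep); exists t'; by rewrite -cA Ht' H1.
apply: im_least; first exact: kmap_mono.
apply: suble_ker.
by rewrite cA -[comp (comp _ bin1) phi]cA Hd -!cA k0 !c0r.
Qed.

Lemma bip_ext A B Z (f g : Hom (bip A B) Z) :
  comp f bin1 = comp g bin1 -> comp f bin2 = comp g bin2 -> f = g.
Proof.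
move=> e1 e2; rewrite -[f]cm1 -[g]cm1 -bid !cDr !cA e1 e2 //.
Qed.

Lemma bip_ext2 A B Z (f g : Hom Z (bip A B)) :
  comp bpr1 f = comp bpr1 g -> comp bpr2 f = comp bpr2 g -> f = g.
Proof.
move=> e1 e2; rewrite -[f]c1m -[g]c1m -bid !cDl -!cA e1 e2 //.
Qed.

Definition ret X Y := exists (s : Hom X Y) (r : Hom Y X), comp r s = idm X.

Lemma ret_refl X : ret X X. Proof. by exists (idm X), (idm X); rewrite cm1. Qed.
Lemma ret_trans X Y Z : ret X Y -> ret Y Z -> ret X Z.
Proof.
case=> s [r e] [s' [r' e']]; exists (comp s' s), (comp r r').
by rewrite cA -[comp (comp r r') s']cA e' cm1 e.
Qed.
Lemma ret_bip A B A' B' : ret A A' -> ret B B' -> ret (bip A B) (bip A' B').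
Proof.
case=> s1 [r1 e1] [s2 [r2 e2]].
have e1' Z (h : Hom A Z) : comp (comp h r1) s1 = h by rewrite -cA e1 cm1.
have e2' Z (h : Hom B Z) : comp (comp h r2) s2 = h by rewrite -cA e2 cm1.
exists (comp (comp bin1 s1) bpr1 + comp (comp bin2 s2) bpr2).
exists (comp (comp bin1 r1) bpr1 + comp (comp bin2 r2) bpr2).
by apply: bip_ext; csimp; rewrite ?e1' ?e2'; csimp.
Qed.
Lemma ret_assoc A B D : ret (bip (bip A B) D) (bip A (bip B D)).
Proof.
exists (comp (comp bin1 bpr1) bpr1 + comp bin2 (comp (comp bin1 bpr2) bpr1 + comp bin2 bpr2)).
exists (comp bin1 (comp bin1 bpr1 + comp (comp bin2 bpr1) bpr2) + comp (comp bin2 bpr2) bpr2).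
by apply: bip_ext; [apply: bip_ext|]; csimp.
Qed.
Lemma ret_z X : ret (bip zob X) X.
Proof.
exists bpr2, bin2; apply: bip_ext; csimp => //.
by rewrite (from_zob bin1).
Qed.

Lemma ret_pow M a b : ret (bip (pow M a) (pow M b)) (pow M (a + b)).
Proof.
elim: a => [|a IH]; first exact: ret_z.
change (ret (bip (bip M (pow M a)) (pow M b)) (bip M (pow M (a + b)))).
apply: ret_trans (ret_assoc _ _ _) _.
exact: ret_bip (ret_refl _) IH.
Qed.

Lemma ret_transport P P' Q Q' X (a : Hom P X) (b : Hom P Q) :
  ret P P' -> ret Q Q' ->
  exists (a' : Hom P' X) (b' : Hom P' Q'),
    subeq (immap (comp a (kmap b))) (immap (comp a' (kmap b'))).
Proof.
case=> sP [rP eP] [sQ [rQ eQ]].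
have eP' Z (f : Hom Z P) : comp rP (comp sP f) = f by rewrite cA eP c1m.
have eQ' Z (f : Hom Z Q) : comp rQ (comp sQ f) = f by rewrite cA eQ c1m.
exists (comp a rP), (comp (comp sQ b) rP); apply: im_subeq; split.
  have : comp (comp (comp sQ b) rP) (comp sP (kmap b)) = 0.
    by rewrite -!cA eP' k0 c0r.
  case/kfact => f Hf; exists f.
  by rewrite -!cA Hf eP'.
have : comp b (comp rP (kmap (comp (comp sQ b) rP))) = 0.
  have msQ : mono sQ by move=> Z g h e; rewrite -(eQ' _ g) -(eQ' _ h) e.
  apply: ((mono_sub sQ).1 msQ); rewrite cA cA.
  by rewrite k0.
case/kfact => f Hf; exists f.
by rewrite -[LHS]cA Hf cA.
Qed.

Lemma ckmap0_mono A B : mono (ckmap (0 : Hom A B)).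
Proof.
have : comp (idm B) (0 : Hom A B) = 0 by rewrite c0r.
case/ckfact => r Hr X g h e.
by rewrite -[g]c1m -[h]c1m -Hr -!cA e.
Qed.

Lemma im_comp_im X Z W (phi : Hom X Z) (g : Hom W X) :
  subeq (immap (comp phi (immap g))) (immap (comp phi g)).
Proof.
split; last exact: im_mon (suble_comp _ (sub_im g)).
apply: im_least; first exact: immap_mono.
case: (imfact g) => e [He ee].
apply: (epi_im ee); exists (idm _); by rewrite cm1 -cA He.
Qed.

Lemma inv_im_ker X Y K L (phi : Hom X Y) (alpha : Hom K Y) (beta : Hom K L) :
  let gam : Hom (bip X K) (bip Y L) :=
    comp bin1 (comp phi bpr1 - comp alpha bpr2) + comp bin2 (comp beta bpr2) in
  subeq (invmap phi (immap (comp alpha (kmap beta)))) (immap (comp bpr1 (kmap gam))).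
Proof.
move=> gam.
have G1 : comp bpr1 gam = comp phi bpr1 - comp alpha bpr2 by rewrite /gam; csimp.
have G2 : comp bpr2 gam = comp beta bpr2 by rewrite /gam; csimp.
clearbody gam.
set g := comp alpha (kmap beta).
case: (imfact g) => e [He ee].
have Hg := k0 gam.
have H1 := congr1 (comp bpr1) Hg; have H2 := congr1 (comp bpr2) Hg.
move: H1 H2; rewrite !cA G1 G2 !c0r cBl => H1 H2.
have {}H1 : comp phi (comp bpr1 (kmap gam)) = comp alpha (comp bpr2 (kmap gam)).
  by apply/eqP; rewrite -subr_eq0; apply/eqP; rewrite !cA.
have {}H2 : comp beta (comp bpr2 (kmap gam)) = 0 by rewrite cA H2.
case: (kfact H2) => u Hu.
split; last first.
  apply: im_least; first exact: kmap_mono.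
  apply: suble_ker.
  have Eg : comp alpha (comp (kmap beta) u) = comp (immap g) (comp e u) by rewrite [RHS]cA He cA.
  by rewrite -cA H1 -Hu Eg cA ck0 c0l.
set n := invmap phi (immap g).
have : comp (ckmap (immap g)) (comp phi n) = 0 by rewrite cA; exact: k0.
case/(mono_norm (immap_mono (g:=g))) => s Hs.
case: (pb_epi s ee) => W [p [t [ep Ht]]].
pose w : Hom W (bip X K) := comp bin1 (comp n p) + comp bin2 (comp (kmap beta) t).
have W1 : comp bpr1 w = comp n p by rewrite /w; csimp.
have W2 : comp bpr2 w = comp (kmap beta) t by rewrite /w; csimp.
clearbody w.
have E1 : comp phi (comp n p) = comp alpha (comp (kmap beta) t).
  by rewrite cA -Hs -cA -Ht cA He cA.
have : comp gam w = 0.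
  by apply: bip_ext2; rewrite c0r cA ?G1 ?G2 ?cBl -!cA ?W1 ?W2 ?E1 ?subrr // cA k0 c0l.
case/kfact => w' Hw'.
apply: (epi_im ep); exists w'; by rewrite -cA Hw' W1.
Qed.

Lemma inv_im_ker' X Y K L (phi : Hom X Y) (alpha : Hom K Y) (beta : Hom K L) :
  exists gam : Hom (bip X K) (bip Y L),
  subeq (invmap phi (immap (comp alpha (kmap beta)))) (immap (comp bpr1 (kmap gam))).
Proof. eexists; exact: (inv_im_ker phi alpha beta). Qed.

Lemma immap_eq A B (f f' : Hom A B) : f = f' -> subeq (immap f) (immap f').
Proof. by move->; exact: subeq_refl. Qed.

Lemma zob_mono A (f : Hom zob A) : mono f.
Proof. by move=> Z g h _; rewrite (to_zob g) (to_zob h). Qed.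

Lemma classC_form (M : Ob) m S (i : Hom S (pow M m)) : classC i ->
  exists k l (alpha : Hom (pow M k) (pow M m)) (beta : Hom (pow M k) (pow M l)),
    subeq i (dimmap alpha (kmap beta)).
Proof.
elim=> {m S i} [m | m | m k S i phi _ [k' [l [a [b IH]]]]
               | m k S i phi _ [k' [l [a [b IH]]]]].
- exists 0%N, 0%N, 0, 0; apply: mono_im'; first exact: zob_mono.
  by rewrite c0l; split; exists 0; rewrite ?c0r ?c0l.
- exists m, 0%N, (idm _), 0; apply: mono_im'; first by move=> Z g h; rewrite !c1m.
  rewrite c1m; split; last by exists (kmap 0); rewrite c1m.
  by apply: suble_ker; rewrite c0l.
- exists k', l, (comp phi a), b; rewrite /dimmap in IH *.
  apply: subeq_trans (im_subeq (subeq_comp phi IH)) _.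
  apply: subeq_trans (im_comp_im _ _) _.
  by apply: immap_eq; rewrite cA.
- have E1 := inv_subeq phi IH.
  case: (inv_im_ker' phi a b) => gam E2.
  case: (ret_transport bpr1 gam (ret_pow M m k') (ret_pow M k l)) => a' [b' E3].
  exists (m + k')%N, (k + l)%N, a', b'.
  exact: subeq_trans E1 (subeq_trans E2 E3).
Qed.

Lemma P1P2_left (M : Ob) : P1_left M <-> P2_left M.
Proof.
split.
  move=> H n S i mi; case: (H n S i mi) => k [l [a [b E]]].
  exists (dimob a (invmap b (0 : Hom zob (pow M l)))), (dimmap a (invmap b 0)); split.
    by apply: classC_img; apply: classC_inv; apply: classC_zero.
  apply: subeq_trans E _; rewrite /dimmap /invmap.
  apply: im_subeq; apply: subeq_comp; apply: subeq_sym.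
  exact: ker_mono (@ckmap0_mono _ _).
move=> H m S i mi; case: (H m S i mi) => S' [i' [ci E]].
case: (classC_form ci) => k [l [a [b E']]]; exists k, l, a, b.
exact: subeq_trans E E'.
Qed.

Lemma kmap_id (A : Ob) : kmap (idm A) = 0.
Proof. by rewrite -[kmap _]c1m k0. Qed.

Lemma ker_id_zero (A : Ob) : subeq (kmap (idm A)) (0 : Hom zob A).
Proof.
split; first by exists 0; rewrite kmap_id c0l.
by apply: suble_ker; rewrite c0r.
Qed.
Lemma ker_zero_id (A : Ob) : subeq (kmap (0 : Hom A zob)) (idm A).
Proof.
split; first by exists (kmap 0); rewrite c1m.
by apply: suble_ker; rewrite c0l.
Qed.

Lemma CL1 (M : Ob) m S (i : Hom S (pow M m)) : classC i ->
  exists N (q : Hom (pow M m) N), classC' q /\ subeq (kmap q) i.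
Proof.
elim=> {m S i} [m | m | m k S i phi _ [N [q [cq IH]]]
               | m k S i phi _ [N [q [cq IH]]]].
- exists (pow M m), (idm _); split; [exact: classC'_id | exact: ker_id_zero].
- exists zob, 0; split; [exact: classC'_zero | exact: ker_zero_id].
- exists (poob phi q), (pomap phi q); split; first exact: classC'_po.
  apply: subeq_trans (ker_po _ _) _; rewrite /dimmap.
  exact: im_subeq (subeq_comp _ IH).
- exists (coimob (comp q phi)), (coimmap (comp q phi)); split; first exact: classC'_comp.
  apply: subeq_trans (ker_coim _) _.
  apply: subeq_trans (ker_compq _ _) _.
  exact: inv_subeq.
Qed.

Lemma CL2 (M : Ob) m N (q : Hom (pow M m) N) : classC' q ->
  exists S (i : Hom S (pow M m)), classC i /\ subeq (kmap q) i.
Proof.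
elim=> {m N q} [m | m | m k N q phi _ [S [i [ci IH]]]
               | m k N q phi _ [S [i [ci IH]]]].
- exists (pow M m), (idm _); split; [exact: classC_top | exact: ker_zero_id].
- exists zob, 0; split; [exact: classC_zero | exact: ker_id_zero].
- exists (invob phi i), (invmap phi i); split; first exact: classC_inv.
  apply: subeq_trans (ker_coim _) _.
  apply: subeq_trans (ker_compq _ _) _.
  exact: inv_subeq.
- exists (dimob phi i), (dimmap phi i); split; first exact: classC_img.
  apply: subeq_trans (ker_po _ _) _; rewrite /dimmap.
  exact: im_subeq (subeq_comp _ IH).
Qed.

Lemma P2_LR (M : Ob) : P2_left M <-> P2_right M.
Proof.
split.
  move=> H n N q eq.
  case: (H n _ (kmap q) (kmap_mono (f:=q))) => S' [i' [ci E]].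
  case: (CL1 ci) => N' [q' [cq E']]; exists N', q'; split=> //.
  exact: subeq_trans E (subeq_sym E').
move=> H n S i mi.
case: (H n _ (ckmap i) (ckmap_epi (f:=i))) => N' [q' [cq E]].
case: (CL2 cq) => S' [i' [ci E']]; exists S', i'; split=> //.
exact: subeq_trans (mono_im mi) (subeq_trans E E').
Qed.
End Basics.

Definition opC (C : AbCat) : AbCat.
refine {| Ob := Ob C; Hom := fun A B => Hom C B A;
  comp := fun A B D h g => comp g h; idm := fun A => idm A;
  zob := zob; bip := fun A B => bip A B;
  bin1 := fun A B => bpr1; bin2 := fun A B => bpr2;
  bpr1 := fun A B => bin1; bpr2 := fun A B => bin2;
  kerob := fun A B f => cokob f; kmap := fun A B f => ckmap f;
  cokob := fun A B f => kerob f; ckmap := fun A B f => kmap f |}.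
- by move=> *; rewrite cA.
- by move=> *; rewrite cm1.
- by move=> *; rewrite c1m.
- by move=> *; rewrite cDr.
- by move=> *; rewrite cDl.
- by move=> *; exact: zob_term.
- by move=> *; exact: zob_init.
- by move=> *; apply: b11.
- by move=> *; apply: b22.
- by move=> *; apply: b21.
- by move=> *; apply: b12.
- by move=> *; apply: bid.
- by move=> *; apply: ck0.
- by move=> A B f X g; apply: ckmapU.
- by move=> *; apply: k0.
- by move=> A B f X g; apply: kmapU.
- by move=> A B f mf X g; apply: epi_normal.
- by move=> A B f mf X g; apply: mono_normal.
Defined.

Section Dual.
Variable C : AbCat.
Local Notation Ob := (Ob C).
Local Notation Hom := (Hom C).
Variable M : Ob.

Lemma op_suble1 X N N' (q : Hom X N) (q' : Hom X N') :
  suble (C:=opC C) q q' -> suble (kmap q') (kmap q).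
Proof. case=> f /= <-; apply: suble_ker; by rewrite -cA k0 c0r. Qed.
Lemma op_suble2 X N N' (q : Hom X N) (q' : Hom X N') : epi q' ->
  suble (kmap q') (kmap q) -> suble (C:=opC C) q q'.
Proof.
move=> eq' /suble_ker0 H; case: (epi_norm eq' H) => h Hh; by exists h.
Qed.
Lemma op_subeq1 X N N' (q : Hom X N) (q' : Hom X N') :
  subeq (C:=opC C) q q' -> subeq (kmap q) (kmap q').
Proof. by case=> a b; split; apply: op_suble1. Qed.
Lemma op_subeq2 X N N' (q : Hom X N) (q' : Hom X N') : epi q -> epi q' ->
  subeq (kmap q) (kmap q') -> subeq (C:=opC C) q q'.
Proof. by move=> e e' [a b]; split; apply: op_suble2. Qed.

Lemma P1R_op : P1_right M <-> P1_left (C:=opC C) M.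
Proof.
split.
  move=> H m S i ei; case: (H m S i ei) => k [l [a [b E]]].
  exists k, l, a, b.
  change (subeq (C:=opC C) i (coimmap (comp (ckmap b) a))).
  apply: op_subeq2 => //; first exact: ckmap_epi.
  exact: subeq_trans E (subeq_sym (ker_coim _)).
move=> H m N q eq; case: (H m N q eq) => k [l [a [b E]]].
change (Hom (pow M m) (pow M k) : Type) in a; change (Hom (pow M l) (pow M k) : Type) in b.
exists k, l, a, b.
have E' : subeq (C:=opC C) q (coimmap (comp (ckmap b) a)) by exact: E.
exact: subeq_trans (op_subeq1 E') (ker_coim _).
Qed.


Lemma opC_epi m S (q : Hom (pow M m) S) : classC (C:=opC C) (M:=M) q -> epi q.
Proof.
case=> {m S q}.
- move=> m X g h _; exact: zob_init.
- by move=> m X g h; rewrite !cm1.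
- move=> m k S i phi _; exact: ckmap_epi.
- move=> m k S i phi _; exact: ckmap_epi.
Qed.

Lemma L1 m S (q : Hom (pow M m) S) : classC (C:=opC C) (M:=M) q ->
  exists N (q'' : Hom (pow M m) N), classC' q'' /\ subeq (kmap q'') (kmap q).
Proof.
elim=> {m S q} [m | m | m k S i phi _ [N [q [cq IH]]]
               | m k S i phi _ [N [q [cq IH]]]].
- exists zob, 0; split; [exact: classC'_zero | exact: subeq_refl].
- exists (pow M m), (idm _); split; [exact: classC'_id | exact: subeq_refl].
- change (Hom (pow M k) (pow M m) : Type) in phi.
  change (Hom (pow M m) S : Type) in i.
  exists (coimob (comp q phi)), (coimmap (comp q phi)); split.
    exact: classC'_comp.
  change (subeq (kmap (coimmap (comp q phi))) (kmap (coimmap (comp i phi)))).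
  apply: subeq_trans (ker_coim _) _.
  apply: subeq_trans (ker_compq _ _) _.
  apply: subeq_trans (inv_subeq _ IH) _.
  apply: subeq_sym; apply: subeq_trans (ker_coim _) _; exact: ker_compq.
- change (Hom (pow M k) (pow M m) : Type) in phi.
  change (Hom (pow M k) S : Type) in i.
  exists (poob phi q), (pomap phi q); split.
    exact: classC'_po.
  change (subeq (kmap (pomap phi q)) (immap (comp phi (kmap i)))).
  apply: subeq_trans (ker_po _ _) _.
  exact: im_subeq (subeq_comp _ IH).
Qed.

Lemma L2 m N (q : Hom (pow M m) N) : classC' q ->
  exists S (q' : Hom (pow M m) S), classC (C:=opC C) (M:=M) q' /\ subeq (kmap q) (kmap q').
Proof.
elim=> {m N q} [m | m | m k N q phi _ [S [i [ci IH]]]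
               | m k N q phi _ [S [i [ci IH]]]].
- exists zob, 0; split; [exact: (@classC_zero (opC C) M m) | exact: subeq_refl].
- exists (pow M m), (idm _); split; [exact: (@classC_top (opC C) M m) | exact: subeq_refl].
- exists (coimob (comp i phi)), (coimmap (comp i phi)); split.
    exact: (@classC_img (opC C) M k m S i phi ci).
  apply: subeq_trans (ker_coim _) _.
  apply: subeq_trans (ker_compq _ _) _.
  apply: subeq_trans (inv_subeq _ IH) _.
  apply: subeq_sym; apply: subeq_trans (ker_coim _) _; exact: ker_compq.
- exists (cokob (comp phi (kmap i))), (ckmap (comp phi (kmap i))); split.
    exact: (@classC_inv (opC C) M k m S i phi ci).
  apply: subeq_trans (ker_po _ _) _.
  exact: im_subeq (subeq_comp _ IH).
Qed.

Lemma P2R_op : P2_right M <-> P2_left (C:=opC C) M.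
Proof.
split.
  move=> H n S q eq; case: (H n S q eq) => N' [q'' [cq E]].
  case: (L2 cq) => S' [q' [cq' E']].
  exists S', q'; split=> //.
  apply: op_subeq2 => //; first exact: opC_epi.
  exact: subeq_trans E E'.
move=> H n N q eq; case: (H n N q eq) => S' [q' [cq' E]].
change (Hom (pow M n) S' : Type) in q'.
case: (L1 cq') => N' [q'' [cq E']].
exists N', q''; split=> //.
exact: subeq_trans (op_subeq1 E) (subeq_sym E').
Qed.

End Dual.

Theorem mainTheorem9 (C : AbCat) (M : Ob C) :
  (P1_left M <-> P2_left M) /\ (P2_left M <-> P1_right M) /\
  (P1_right M <-> P2_right M).
Proof.
have h1 := P1P2_left M.
have h2 := P2_LR M.
have h3 := P1R_op M.
have h4 := P2R_op M.
have h5 := P1P2_left (C:=opC C) M.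
split; first exact: h1.
split; tauto.
Qed.
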